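(* Let $y,\tilde{y},l,\tilde{l},u,\tilde{u}\in\mathcal{R}(\mathbb{R}^{+},\mathbb{R})$ with $l\leq u$, $\tilde l\leq\tilde u$, $l_0\leq y_0\leq u_0$, $\tilde l_0\leq\tilde y_0\leq\tilde u_0$, and $\inf_{s\leq t}(u_s-l_s)>0$, $\inf_{s\leq t}(\tilde u_s-\tilde l_s)>0$ for all $t\geq0$. Let $(x,k)$ and $(\tilde{x},\tilde{k})$ be the solutions of $RP^u_l(y)$ and $RP^{\tilde{u}}_{\tilde{l}}(\tilde{y})$ respectively. Let $T>0$ and $\|f\|_{<T}=\sup_{0\leq s<T}|f_s|$. Then $$\|k-\tilde{k}\|_{<T}\leq 2\big(\|y-\tilde{y}\|_{<T}+\|l-\tilde{l}\|_{<T}+\|u-\tilde{u}\|_{<T}\big),$$ $$\|x-\tilde{x}\|_{<T}\leq 3\big(\|y-\tilde{y}\|_{<T}+\|l-\tilde{l}\|_{<T}+\|u-\tilde{u}\|_{<T}\big).$$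
   Context: A function $f:\mathbb{R}^+=[0,\infty)\to\mathbb{R}$ is regulated if it has a left limit $f_{t^-}$ at every $t>0$ and a right limit $f_{t^+}$ at every $t\geq0$; $\mathcal{R}(\mathbb{R}^{+},\mathbb{R})$ is the set of regulated functions. Write $\Delta^+f_t=f_{t^+}-f_t$, $a\wedge b=\min(a,b)$, $a\vee b=\max(a,b)$. For a function $\phi$ of bounded variation, $\phi^r_t=\phi^c_t+\sum_{0<s\leq t}(\phi_s-\phi_{s^-})$ is its right-continuous part ($\phi^c$ the continuous part). Two-barrier problem $RP^u_l(y)$ (with $l_0\leq y_0\leq u_0$): $(x,k)$ regulated is a solution if there are $\phi^1,\phi^2$ with (i) $x=y+k$, $k=\phi^1-\phi^2$; (ii) $l\leq x\leq u$; (iii) $\phi^1,\phi^2$ non-decreasing, $\phi^1_0=\phi^2_0=0$; (iv) $\int_{[0,\infty[}\big((x_s-l_s)\wedge(x_{s^+}-l_{s^+})\big)d\phi^{1,r}_s=\int_{[0,\infty[}\big((u_s-x_s)\wedge(u_{s^+}-x_{s^+})\big)d\phi^{2,r}_s=0$; (v) for all $t$, $\sum_{s\leq t}(x_{s^+}-l_{s^+})\Delta^+\phi^1_s=\sum_{s\leq t}(u_s-x_s)\Delta^+\phi^1_s=0$ and $\sum_{s\leq t}(u_{s^+}-x_{s^+})\Delta^+\phi^2_s=\sum_{s\leq t}(x_s-l_s)\Delta^+\phi^2_s=0$. Under the stated hypotheses the solution exists and is unique. *)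

(* Defs.v *)
From HB Require Import structures.
From mathcomp Require Import all_boot all_order all_algebra.
From mathcomp Require Import all_classical all_reals all_analysis.
Set Implicit Arguments. Unset Strict Implicit. Unset Printing Implicit Defensive.
Import Order.TTheory GRing.Theory Num.Theory.
Import numFieldNormedType.Exports.
Local Open Scope classical_set_scope.
Local Open Scope ring_scope.

Section Defs.
Context {R : realType}.

Definition rlim (f : R -> R) (t : R) : R := lim (f x @[x --> t^'+]).
Definition llim (f : R -> R) (t : R) : R := lim (f x @[x --> t^'-]).

Definition regulated (f : R -> R) : Prop :=
  (forall t, 0 < t -> cvg (f x @[x --> t^'-])) /\
  (forall t, 0 <= t -> cvg (f x @[x --> t^'+])).

Definition Dplus (f : R -> R) (t : R) : R := rlim f t - f t.

Definition nondecr0 (phi : R -> R) : Prop :=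
  forall s t, 0 <= s -> s <= t -> phi s <= phi t.

Definition cont_part (phi : R -> R) (t : R) : R :=
  phi t - fine (\esum_(s in `]0, t]) (phi s - llim phi s)%:E)
        - fine (\esum_(s in `[0, t[) (Dplus phi s)%:E).

Definition rc_part (phi : R -> R) (t : R) : R :=
  cont_part phi t + fine (\esum_(s in `]0, t]) (phi s - llim phi s)%:E).

Definition stieltjes_zero (phi g : R -> R) : Prop :=
  exists F : cumulative R R,
    (forall t, 0 <= t -> F t = rc_part phi t) /\ (forall t, t < 0 -> F t = 0) /\
    (\int[lebesgue_stieltjes_measure F]_(s in (`[0%R, +oo[ : set R)) (g s)%:E = 0)%E.

Definition is_RP_solution (y l u x k : R -> R) : Prop :=
  regulated x /\ regulated k /\
  exists phi1 phi2 : R -> R,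
    (forall t, 0 <= t -> x t = y t + k t /\ k t = phi1 t - phi2 t) /\
    (forall t, 0 <= t -> l t <= x t <= u t) /\
    (nondecr0 phi1 /\ nondecr0 phi2 /\ phi1 0 = 0 /\ phi2 0 = 0) /\
    stieltjes_zero phi1 (fun s => Num.min (x s - l s) (rlim x s - rlim l s)) /\
    stieltjes_zero phi2 (fun s => Num.min (u s - x s) (rlim u s - rlim x s)) /\
    (forall t, 0 <= t ->
       \esum_(s in `[0, t]) ((rlim x s - rlim l s) * Dplus phi1 s)%:E = 0%E /\
       \esum_(s in `[0, t]) ((u s - x s) * Dplus phi1 s)%:E = 0%E /\
       \esum_(s in `[0, t]) ((rlim u s - rlim x s) * Dplus phi2 s)%:E = 0%E /\
       \esum_(s in `[0, t]) ((x s - l s) * Dplus phi2 s)%:E = 0%E).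

Definition supnT (T : R) (f : R -> R) : \bar R :=
  ereal_sup [set (`|f s|)%:E | s in `[0, T[].

End Defs.

(* Main.v *)
Require Import Defs.
From HB Require Import structures.
From mathcomp Require Import all_boot all_order all_algebra.
From mathcomp Require Import all_classical all_reals all_analysis.
From mathcomp Require Import finmap lra.
Import Order.TTheory GRing.Theory Num.Theory.
Import numFieldNormedType.Exports.
Local Open Scope classical_set_scope.
Local Open Scope ring_scope.
Section G.
Context {R : realType}.

Lemma rc_decomp (phi : R -> R) t :
  rc_part phi t = phi t - fine (\esum_(s in `[0, t[) (Dplus phi s)%:E).
Proof. by rewrite /rc_part /cont_part addrAC subrK. Qed.

Lemma nd_cvgr (phi : R -> R) s : nondecr0 phi -> 0 <= s ->
  cvg (phi x @[x --> s^'+]).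
Proof.
move=> nd s0; apply: nondecreasing_at_right_is_cvgr.
- near=> z => p q; rewrite !in_itv/= => /andP[sp _] /andP[sq _] pq.
  by apply: nd => //; apply: le_trans (ltW sp).
- near=> z; exists (phi s) => ? [w /=]; rewrite in_itv/= => /andP[sw _] <-.
  exact: nd (ltW sw).
Unshelve. all: by end_near. Qed.

Lemma Dplus_ge0 (phi : R -> R) s : nondecr0 phi -> 0 <= s -> 0 <= Dplus phi s.
Proof.
move=> nd s0; rewrite /Dplus subr_ge0 /rlim; apply: limr_ge; first exact: nd_cvgr.
near=> z. apply: nd => //.
Unshelve. all: by end_near. Qed.

Lemma le_integral_nm d (T : measurableType d) (mu : {measure set T -> \bar R}) (D : set T) (f1 f2 : T -> \bar R) :
  (forall x, D x -> (0 <= f1 x)%E) -> (forall x, D x -> (f1 x <= f2 x)%E) ->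
  (\int[mu]_(x in D) f1 x <= \int[mu]_(x in D) f2 x)%E.
Proof.
move=> f10 f12; rewrite !ge0_integralE//; last first.
  by move=> x Dx; exact: le_trans (f10 _ Dx) (f12 _ Dx).
rewrite ge_ereal_sup// => _ [h /= hf <-]; apply: ereal_sup_ubound; exists h => //= x.
apply: le_trans (hf x) _; rewrite /patch; case: ifP => // /set_mem Dx; exact: f12.
Qed.


Lemma ls_itv (F : cumulative R R) p q : p <= q ->
  lebesgue_stieltjes_measure F `]p, q] = (F q - F p)%:E.
Proof.
move=> pq; rewrite /lebesgue_stieltjes_measure /measure_extension measurable_mu_extE/=.
  by rewrite wlength_itv_bnd.
exact: is_ocitv.
Qed.

Lemma mass_bound (F : cumulative R R) (g : R -> R) (A : set R) m :
  measurable A -> A `<=` `[0, +oo[ -> 0 <= m -> (forall s, A s -> m <= g s) ->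
  (forall s, 0 <= s -> 0 <= g s) ->
  (m%:E * lebesgue_stieltjes_measure F A <=
    \int[lebesgue_stieltjes_measure F]_(s in (`[0%R, +oo[ : set R)) (g s)%:E)%E.
Proof.
move=> mA A0 m0 Ag g0.
have mD : measurable (`[0%R, +oo[ : set R) by exact: measurable_itv.
have -> : lebesgue_stieltjes_measure F A =
    lebesgue_stieltjes_measure F (A `&` `[0%R, +oo[) by rewrite setIidl.
have H := @integralZl_indic _ _ _ (lebesgue_stieltjes_measure F) _ mD (fun _ => A) m.
rewrite /= in H; rewrite -integral_indic// -H//; last first.
  by move=> m0'; move: m0; rewrite leNgt m0'.
apply: le_integral_nm => x Dx; first by rewrite lee_fin mulr_ge0.
rewrite lee_fin indicE; case: (boolP (x \in A)) => [/set_mem Ax|_].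
  by rewrite mulr1 Ag.
by rewrite mulr0 g0//; move: Dx; rewrite /= in_itv/= andbT.
Qed.

Lemma esum_pt_le (I : set R) (a : R -> R) s : I s ->
  (\esum_(i in I) (a i)%:E = 0)%E -> a s <= 0.
Proof.
move=> Is H; suff : ((a s)%:E <= \esum_(i in I) (a i)%:E)%E by rewrite H lee_fin.
apply: esum_ge; exists [set s].
  by split; [exact: finite_set1 | move=> _ ->].
by rewrite fsbig_set1.
Qed.

Lemma flatP (phi g w : R -> R) (F : cumulative R R) :
  nondecr0 phi -> (forall t, 0 <= t -> F t = rc_part phi t) ->
  (\int[lebesgue_stieltjes_measure F]_(s in (`[0%R, +oo[ : set R)) (g s)%:E = 0)%E ->
  (forall s, 0 <= s -> 0 <= g s) ->
  (forall t, 0 <= t -> \esum_(s in `[0, t]) (w s * Dplus phi s)%:E = 0%E) ->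
  forall p q m, 0 <= p -> p <= q -> 0 < m ->
  (forall s, p < s -> s <= q -> m <= g s) ->
  (forall s, p <= s -> s < q -> 0 < w s) -> phi q = phi p.
Proof.
move=> nd HF Hint g0 Hw p q m p0 pq m0 Hg Hwp.
have q0 : 0 <= q by apply: le_trans pq.
have Fqp : F q = F p.
  have := @mass_bound F g `]p, q] m (measurable_itv _) _ (ltW m0).
  rewrite ls_itv// Hint => /(_ _ _ g0) H.
  have {H} : m * (F q - F p) <= 0.
    rewrite -lee_fin EFinM; apply: H.
    - by move=> x /=; rewrite !in_itv/= andbT => /andP[px _]; apply: le_trans (ltW px).
    - by move=> x /=; rewrite in_itv/= => /andP[px xq]; exact: Hg.
  rewrite pmulr_rle0// subr_le0 => H; apply/eqP; rewrite eq_le H /=.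
  exact: cumulative_is_nondecreasing.
have J : \esum_(s in `[0, q[) (Dplus phi s)%:E = \esum_(s in `[0, p[) (Dplus phi s)%:E.
  rewrite esum_mkcond [RHS]esum_mkcond; apply: eq_esum => s _.
  rewrite !mem_setE !in_itv /=.
  case: (boolP (0 <= s)) => s0 //=.
  case: (ltP s q) => sq; case: (ltP s p) => sp //.
    have := @esum_pt_le _ _ s _ (Hw q q0).
    rewrite /= in_itv /= s0 (ltW sq) => /(_ isT) H.
    have ws := Hwp s sp sq.
    have D0 := Dplus_ge0 phi s nd s0.
    apply/eqP; rewrite eqe eq_le D0 andbT.
    by move: H; rewrite pmulr_rle0.
  by move: (lt_le_trans sp pq); rewrite ltNge sq.
by rewrite -[phi q](subrK (fine (\esum_(s in `[0, q[) (Dplus phi s)%:E)))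
  -rc_decomp -HF// Fqp HF// rc_decomp J subrK.
Qed.

Lemma fin_ub (X : set R) s : finite_set X -> X `<=` `[0, s[ -> 0 < s ->
  exists2 r1, r1 < s & forall x, X x -> x <= r1.
Proof.
move=> fX Xs s0.
have key : forall l : seq R, (forall x, x \in l -> x < s) ->
    exists2 r1, r1 < s & forall x, x \in l -> x <= r1.
  elim=> [|a l IH] H; first by exists 0.
  have [r1 r1s Hr1] : exists2 r1, r1 < s & forall x, x \in l -> x <= r1.
    by apply: IH => x xl; apply: H; rewrite in_cons xl orbT.
  exists (Num.max a r1); first by rewrite gt_max H ?mem_head.
  move=> x; rewrite in_cons le_max => /orP[/eqP->|xl]; first by rewrite lexx.
  by rewrite Hr1 ?orbT.
have [r1 r1s Hr1] : exists2 r1, r1 < s &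
    forall x, x \in finmap.enum_fset (fset_set X) -> x <= r1.
  apply: key => x xX; have : x \in fset_set X := xX.
  rewrite in_fset_set// => /set_mem /Xs.
  by rewrite /= in_itv/= => /andP[].
exists r1 => // x Xx; apply: Hr1.
suff : x \in fset_set X by [].
by rewrite in_fset_set// mem_set.
Qed.

Lemma esum_subset (I J : set R) (a : R -> \bar R) : I `<=` J ->
  (\esum_(i in I) a i <= \esum_(i in J) a i)%E.
Proof.
move=> IJ; apply: ge_ereal_sup => _ [X [fX XI] <-]; apply: ereal_sup_ubound.
by exists X => //; split => //; exact: subset_trans XI IJ.
Qed.

Lemma leftQ (phi g : R -> R) (F : cumulative R R) :
  nondecr0 phi -> (forall t, 0 <= t -> F t = rc_part phi t) ->
  (\int[lebesgue_stieltjes_measure F]_(s in (`[0%R, +oo[ : set R)) (g s)%:E = 0)%E ->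
  (forall s, 0 <= s -> 0 <= g s) ->
  forall s, 0 < s -> 0 < g s -> forall e, 0 < e ->
  exists2 r0, r0 < s & forall r, r0 < r -> r <= s -> 0 <= r -> phi s - phi r <= e.
Proof.
move=> nd HF Hint g0 s s0 gs e e0.
set mu := lebesgue_stieltjes_measure F.
have mu1 : mu [set s] = 0%E.
  have := @mass_bound F g [set s] (g s) (measurable_set1 s) _ (ltW gs) _ g0.
  rewrite Hint => H.
  have {}H : ((g s)%:E * mu [set s] <= 0)%E.
    apply: H; first by move=> x /= ->; rewrite in_itv/= (ltW s0).
    by move=> x /= ->.
  apply/eqP; rewrite eq_le measure_ge0 andbT.
  by move: H; rewrite pmule_rle0// lte_fin.
pose A n := (`]s - n.+1%:R^-1, s]%classic : set R).
pose u n := F s - F (s - n.+1%:R^-1).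
have muA : mu \o A = EFin \o u.
  apply/funext => n /=; rewrite /mu ls_itv// lerBlDr lerDl invr_ge0//.
have cA : (mu \o A) n @[n --> \oo] --> mu [set s].
  rewrite set1_bigcap_oc; apply: nonincreasing_cvg_mu.
  - change (mu (A 0%N) < +oo)%E; rewrite -[mu (A 0%N)]/((mu \o A) 0%N) muA /= ltry//.
  - by move=> i; exact: measurable_itv.
  - by rewrite -set1_bigcap_oc; exact: measurable_set1.
  - move=> n m nm; apply/subsetPset => x; rewrite /A /= !in_itv/= => /andP[h1 ->].
    rewrite andbT; apply: le_lt_trans h1.
    by rewrite lerB// lef_pV2 ?ler_nat ?posrE.
rewrite muA mu1 in cA.
have cu : u n @[n --> \oo] --> 0 by move/fine_cvgP : cA => [_].
have [N _ HN] : exists2 N, True & u N < e / 2.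
  near \oo => N; exists N => //; near: N.
  by apply: cvgr_lt; [exact: cu | rewrite divr_gt0].
set J := fun t => \esum_(x in `[0, t[) (Dplus phi x)%:E.
have J0 t : (0 <= J t)%E.
  apply: esum_ge0 => x /=; rewrite in_itv/= => /andP[x0 _].
  by rewrite lee_fin Dplus_ge0.
have JJ : exists2 r1, r1 < s & forall r, r1 < r -> r <= s -> 0 <= r ->
    fine (J s) - fine (J r) <= e / 2.
  have [Jsf|Jsi] := boolP (J s \is a fin_num); last first.
    exists 0 => // r _ _ r0.
    have -> : J s = +oo%E.
      by move: Jsi (J0 s); rewrite fin_numE negb_and !negbK => /orP[/eqP->|/eqP->].
    rewrite /= sub0r; apply: le_trans (_ : 0 <= e / 2); last by rewrite divr_ge0// ltW.
    by rewrite oppr_le0 fine_ge0.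
  have : ((fine (J s) - e / 2)%:E < J s)%E.
    by rewrite -(fineK Jsf) lte_fin ltrBlDr ltrDl divr_gt0.
  move=> /ereal_sup_gt[_ [X [fX XI] <-]] HX.
  have [r1 r1s Hr1] := fin_ub _ _ fX XI s0.
  exists r1 => // r r1r rs r0.
  have HXr : (\sum_(i \in X) (Dplus phi i)%:E <= J r)%E.
    apply: esum_ge; exists X => //; split => // x Xx /=; rewrite in_itv/=.
    have := XI _ Xx; rewrite /= in_itv/= => /andP[-> _] /=.
    exact: le_lt_trans (Hr1 _ Xx) r1r.
  have Jrs : (J r <= J s)%E.
    apply: esum_subset => x /=; rewrite !in_itv/= => /andP[-> xr] /=.
    exact: lt_le_trans xr rs.
  have Jrf : J r \is a fin_num.
    by rewrite ge0_fin_numE// (le_lt_trans Jrs)// ltey_eq Jsf.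
  move: (lt_le_trans HX HXr); rewrite -(fineK Jrf) lte_fin.
  by rewrite ltrBlDr -ltrBlDl => /ltW.
have [r1 r1s Hr1] := JJ.
exists (Num.max (s - N.+1%:R^-1) r1).
  by rewrite gt_max r1s andbT ltrBlDr ltrDl invr_gt0.
move=> r; rewrite gt_max => /andP[h1 h2] rs r0.
have phiE t : 0 <= t -> phi t = F t + fine (J t).
  by move=> t0; rewrite HF// rc_decomp subrK.
rewrite phiE ?(ltW s0)// phiE// opprD addrACA (splitr e) lerD//; last exact: Hr1.
apply: le_trans (ltW HN); rewrite /u lerB//.
exact/cumulative_is_nondecreasing/ltW.
Unshelve. all: by end_near. Qed.

Lemma rlimB_ge (f g : R -> R) s B : cvg (f x @[x --> s^'+]) ->
  cvg (g x @[x --> s^'+]) -> (\forall r \near s^'+, B <= f r - g r) ->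
  B <= rlim f s - rlim g s.
Proof.
move=> cf cg H; rewrite /rlim -limB//; apply: limr_ge => //.
exact: is_cvgB.
Qed.

Lemma rlimB_le (f g : R -> R) s B : cvg (f x @[x --> s^'+]) ->
  cvg (g x @[x --> s^'+]) -> (\forall r \near s^'+, f r - g r <= B) ->
  rlim f s - rlim g s <= B.
Proof.
move=> cf cg H; rewrite /rlim -limB//; apply: limr_le => //.
exact: is_cvgB.
Qed.

Lemma rlim_eqB (f g h : R -> R) s : cvg (g x @[x --> s^'+]) ->
  cvg (h x @[x --> s^'+]) -> (\forall r \near s^'+, f r = g r - h r) ->
  rlim f s = rlim g s - rlim h s.
Proof.
move=> cg ch H; rewrite /rlim; apply: cvg_lim => //.
apply: (cvg_trans _ (cvgB cg ch)); apply: near_eq_cvg.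
by apply: filterS H => r ->.
Qed.

Lemma Dplus0 (phi w : R -> R) s : nondecr0 phi -> 0 <= s -> 0 < w s ->
  \esum_(r in `[0, s]) (w r * Dplus phi r)%:E = 0%E -> Dplus phi s = 0.
Proof.
move=> nd s0 ws H.
have : w s * Dplus phi s <= 0.
  by apply: (esum_pt_le _ _ s _ H); rewrite /= in_itv/= s0 lexx.
rewrite pmulr_rle0// => D0; apply/eqP; rewrite eq_le D0; exact: Dplus_ge0.
Qed.

Lemma one_side (y yt l lt u ut x k xt kt : R -> R) (T a b c : R) :
  regulated y -> regulated yt -> regulated l -> regulated lt ->
  regulated u -> regulated ut ->
  is_RP_solution y l u x k -> is_RP_solution yt lt ut xt kt -> 0 < T ->
  (forall s, 0 <= s -> s < T -> `|y s - yt s| <= a) ->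
  (forall s, 0 <= s -> s < T -> `|l s - lt s| <= b) ->
  (forall s, 0 <= s -> s < T -> `|u s - ut s| <= c) ->
  forall t, 0 <= t -> t < T -> k t - kt t <= a + b + c.
Proof.
move=> ry ryt rl rlt ru rut
  [rx [rk [p1 [p2 [Hxk [Hlu [[nd1 [nd2 [p10 p20]]]
     [[F1 [HF1 [_ Hi1]]] [[F2 [HF2 [_ Hi2]]] Hv]]]]]]]]]
  [rxt [rkt [q1 [q2 [Hxkt [Hlut [[ndq1 [ndq2 [q10 q20]]]
     [[G1 [HG1 [_ Hj1]]] [[G2 [HG2 [_ Hj2]]] Hvt]]]]]]]]]
  T0 Ha Hb Hc t t0 tT.
have a0 : 0 <= a := le_trans (normr_ge0 _) (Ha 0 (lexx 0) T0).
have b0 : 0 <= b := le_trans (normr_ge0 _) (Hb 0 (lexx 0) T0).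
have c0 : 0 <= c := le_trans (normr_ge0 _) (Hc 0 (lexx 0) T0).
rewrite leNgt; apply/negP => htD.
pose h s := k s - kt s.
have [d d0 hd] : exists2 d, 0 < d & a + b + c + d < h t.
  exists ((h t - (a + b + c)) / 2); rewrite /h; lra.
have KP : forall s, 0 <= s -> s < T -> a + b + c + d < h s ->
    d < x s - l s /\ d < ut s - xt s.
  move=> s s0 sT hs.
  have := Ha s s0 sT; have := Hb s s0 sT; have := Hc s s0 sT; rewrite !ler_norml.
  have [xs ks] := Hxk s s0; have [xts kts] := Hxkt s s0.
  have /andP[l1 u1] := Hlu s s0; have /andP[l2 u2] := Hlut s s0.
  move=> /andP[c1 c2] /andP[b1 b2] /andP[a1 a2]; move: hs; rewrite /h => hs.
  split; lra.
have cv (f : R -> R) s : regulated f -> 0 <= s -> cvg (f r @[r --> s^'+]).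
  by move=> [_ +] s0; apply.
have gpx s : 0 <= s -> 0 <= rlim x s - rlim l s.
  move=> s0; apply: rlimB_ge; [exact: cv|exact: cv|].
  near=> r; have rs : s < r by near: r; exact: nbhs_right_gt.
  by have /andP[h1 h2] := Hlu r (le_trans s0 (ltW rs)); rewrite subr_ge0.
have gpux s : 0 <= s -> 0 <= rlim u s - rlim x s.
  move=> s0; apply: rlimB_ge; [exact: cv|exact: cv|].
  near=> r; have rs : s < r by near: r; exact: nbhs_right_gt.
  by have /andP[h1 h2] := Hlu r (le_trans s0 (ltW rs)); rewrite subr_ge0.
have gpxt s : 0 <= s -> 0 <= rlim xt s - rlim lt s.
  move=> s0; apply: rlimB_ge; [exact: cv|exact: cv|].
  near=> r; have rs : s < r by near: r; exact: nbhs_right_gt.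
  by have /andP[h1 h2] := Hlut r (le_trans s0 (ltW rs)); rewrite subr_ge0.
have gput s : 0 <= s -> 0 <= rlim ut s - rlim xt s.
  move=> s0; apply: rlimB_ge; [exact: cv|exact: cv|].
  near=> r; have rs : s < r by near: r; exact: nbhs_right_gt.
  by have /andP[h1 h2] := Hlut r (le_trans s0 (ltW rs)); rewrite subr_ge0.
have RL s : 0 <= s -> s < t -> (forall r, s < r -> r <= t -> a + b + c + d < h r) ->
    d <= rlim x s - rlim l s /\ d <= rlim ut s - rlim xt s.
  move=> s0 st Hr.
  have HH : \forall r \near s^'+, d < x r - l r /\ d < ut r - xt r.
    near=> r; have rs : s < r by near: r; exact: nbhs_right_gt.
    have rt : r < t by near: r; exact: nbhs_right_lt.
    exact: KP r (le_trans s0 (ltW rs)) (lt_trans rt tT) (Hr r rs (ltW rt)).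
  split; (apply: rlimB_ge; [exact: cv|exact: cv|]);
    by apply: filterS HH => r [h1 h2]; apply: ltW.
have h0 : h 0 = 0.
  by rewrite /h (Hxk 0 (lexx 0)).2 (Hxkt 0 (lexx 0)).2 p10 p20 q10 q20 !subrr.
pose E := [set r | 0 <= r /\ r <= t /\ h r <= a + b + c + d].
have hsE : has_sup E.
  split; first by exists 0; split => //; split => //; rewrite h0; lra.
  by exists t => r [_ []].
pose sg := sup E.
have sg0 : 0 <= sg by apply: sup_upper_bound => //; split => //; split => //; rewrite h0; lra.
have sgt : sg <= t by apply: ge_sup; [exact: hsE.1 | move=> r [_ []]].
have Hgt r : sg < r -> r <= t -> a + b + c + d < h r.
  move=> sgr rt; rewrite ltNge; apply/negP => hr.
  have : r <= sg by apply: sup_upper_bound => //; split; [exact: le_trans sg0 (ltW sgr)|].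
  by rewrite leNgt sgr.
have [xtl uxt] := KP t t0 tT hd.
have near_gt (P : R -> Prop) : (forall r, t < r -> r < T -> P r) ->
    \forall r \near t^'+, P r.
  move=> HP; near=> r; apply: HP; first by near: r; exact: nbhs_right_gt.
  by near: r; exact: nbhs_right_lt.
have ek : rlim k t = rlim p1 t - rlim p2 t.
  apply: rlim_eqB; [exact: nd_cvgr|exact: nd_cvgr|].
  by apply: near_gt => r tr _; exact: (Hxk r (le_trans t0 (ltW tr))).2.
have ekt : rlim kt t = rlim q1 t - rlim q2 t.
  apply: rlim_eqB; [exact: nd_cvgr|exact: nd_cvgr|].
  by apply: near_gt => r tr _; exact: (Hxkt r (le_trans t0 (ltW tr))).2.
have Dp2 := Dplus0 p2 (fun s => x s - l s) t nd2 t0 (lt_trans d0 xtl) (Hv t t0).2.2.2.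
have Dq1 := Dplus0 q1 (fun s => ut s - xt s) t ndq1 t0 (lt_trans d0 uxt) (Hvt t t0).2.1.
have Dp1 := Dplus_ge0 p1 t nd1 t0.
have Dq2 := Dplus_ge0 q2 t ndq2 t0.
have ht_le : h t <= rlim k t - rlim kt t.
  move: Dp2 Dq1 Dp1 Dq2; rewrite ek ekt /Dplus /h (Hxk t t0).2 (Hxkt t t0).2; lra.
have ekx : rlim k t = rlim x t - rlim y t.
  apply: rlim_eqB; [exact: cv|exact: cv|].
  by apply: near_gt => r tr _; move: (Hxk r (le_trans t0 (ltW tr))).1; lra.
have ektx : rlim kt t = rlim xt t - rlim yt t.
  apply: rlim_eqB; [exact: cv|exact: cv|].
  by apply: near_gt => r tr _; move: (Hxkt r (le_trans t0 (ltW tr))).1; lra.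
have B1 : - a <= rlim y t - rlim yt t.
  apply: rlimB_ge; [exact: cv|exact: cv|]; apply: near_gt => r tr rT.
  by have := Ha r (le_trans t0 (ltW tr)) rT; rewrite ler_norml => /andP[].
have B2 : rlim l t - rlim lt t <= b.
  apply: rlimB_le; [exact: cv|exact: cv|]; apply: near_gt => r tr rT.
  by have := Hb r (le_trans t0 (ltW tr)) rT; rewrite ler_norml => /andP[].
have B3 : rlim u t - rlim ut t <= c.
  apply: rlimB_le; [exact: cv|exact: cv|]; apply: near_gt => r tr rT.
  by have := Hc r (le_trans t0 (ltW tr)) rT; rewrite ler_norml => /andP[].
have B4 := gpxt t t0; have B5 := gpux t t0.
have [gx|gx] := leP (rlim x t - rlim l t) 0.
  by move: ht_le; rewrite ekx ektx; lra.
have [gt|gt] := leP (rlim ut t - rlim xt t) 0.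
  by move: ht_le; rewrite ekx ektx; lra.
pose m := Num.min d (Num.min (rlim x t - rlim l t) (rlim ut t - rlim xt t)).
have m0 : 0 < m by rewrite /m !lt_min d0 gx gt.
have md : m <= d by rewrite /m ge_min lexx.
have mx : m <= rlim x t - rlim l t by rewrite /m !ge_min lexx orbT.
have mu' : m <= rlim ut t - rlim xt t by rewrite /m !ge_min lexx !orbT.
have RLs s : sg <= s -> s <= t ->
    m <= rlim x s - rlim l s /\ m <= rlim ut s - rlim xt s.
  move=> sgs; rewrite le_eqVlt => /orP[/eqP->|st]; first by split.
  have [h1 h2] := RL s (le_trans sg0 sgs) st (fun r sr rt => Hgt r (le_lt_trans sgs sr) rt).
  by split; apply: le_trans md _.
pose g1 s := Num.min (x s - l s) (rlim x s - rlim l s).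
pose g2 s := Num.min (ut s - xt s) (rlim ut s - rlim xt s).
have g10 s : 0 <= s -> 0 <= g1 s.
  move=> s0; rewrite /g1 le_min gpx// andbT subr_ge0.
  by have /andP[] := Hlu s s0.
have g20 s : 0 <= s -> 0 <= g2 s.
  move=> s0; rewrite /g2 le_min gput// andbT subr_ge0.
  by have /andP[] := Hlut s s0.
have g12 s : sg <= s -> s <= t -> a + b + c + d < h s -> m <= g1 s /\ m <= g2 s.
  move=> sgs st hs; have [h1 h2] := RLs s sgs st.
  have [k1 k2] := KP s (le_trans sg0 sgs) (le_lt_trans st tT) hs.
  rewrite /g1 /g2 !le_min h1 h2 !andbT; split; apply: le_trans md _; exact: ltW.
have hsg : h sg <= a + b + c + d.
  rewrite leNgt; apply/negP => hsg.
  have sgp : 0 < sg.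
    rewrite lt_neqAle sg0 andbT; apply/eqP => sg00.
    by move: hsg; rewrite -sg00 h0; lra.
  have [m1 m2] := g12 sg (lexx _) sgt hsg.
  pose eps := (h sg - (a + b + c + d)) / 4.
  have eps0 : 0 < eps by rewrite /eps; lra.
  have [r1 r1s H1] := leftQ p1 g1 F1 nd1 HF1 Hi1 g10 sg sgp (lt_le_trans m0 m1) eps eps0.
  have [r2 r2s H2] := leftQ q2 g2 G2 ndq2 HG2 Hj2 g20 sg sgp (lt_le_trans m0 m2) eps eps0.
  have [r [r0 [rt hr]] hr'] : exists2 r, E r & sg - (sg - Num.max r1 r2) < r.
    by apply: sup_adherent => //; rewrite subr_gt0 gt_max r1s r2s.
  have rsg : r <= sg by apply: sup_upper_bound.
  have [rr1 rr2] : r1 < r /\ r2 < r.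
    by move: hr'; rewrite /sg opprB addrCA subrr addr0 gt_max => /andP[].
  have e1 := H1 r rr1 rsg r0; have e2 := H2 r rr2 rsg r0.
  have e3 := nd2 r sg r0 rsg; have e4 := ndq1 r sg r0 rsg.
  move: hr; rewrite /h (Hxk r r0).2 (Hxkt r r0).2.
  move: hsg; rewrite /h (Hxk sg sg0).2 (Hxkt sg sg0).2.
  rewrite /eps in e1 e2; rewrite /h (Hxk sg sg0).2 (Hxkt sg sg0).2 in e1 e2.
  lra.
have fp1 : p1 t = p1 sg.
  apply: (flatP p1 g1 (fun s => rlim x s - rlim l s) F1 nd1 HF1 Hi1 g10
    (fun t t0 => (Hv t t0).1) sg t m sg0 sgt m0).
  - by move=> s sgs st; exact: (g12 s (ltW sgs) st (Hgt s sgs st)).1.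
  - by move=> s sgs st; exact: lt_le_trans m0 (RLs s sgs (ltW st)).1.
have fq2 : q2 t = q2 sg.
  apply: (flatP q2 g2 (fun s => rlim ut s - rlim xt s) G2 ndq2 HG2 Hj2 g20
    (fun t t0 => (Hvt t t0).2.2.1) sg t m sg0 sgt m0).
  - by move=> s sgs st; exact: (g12 s (ltW sgs) st (Hgt s sgs st)).2.
  - by move=> s sgs st; exact: lt_le_trans m0 (RLs s sgs (ltW st)).2.
have e3 := nd2 sg t sg0 sgt; have e4 := ndq1 sg t sg0 sgt.
move: hsg hd; rewrite /h (Hxk sg sg0).2 (Hxkt sg sg0).2 (Hxk t t0).2 (Hxkt t t0).2.
rewrite fp1 fq2; lra.
Unshelve. all: by end_near. Qed.
End G.

Lemma supnT_ge0 (R : realType) (T : R) (f : R -> R) : 0 < T -> (0 <= supnT T f)%E.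
Proof.
move=> T0; apply: le_trans (_ : (`|f 0|%:E <= _)%E); first by rewrite lee_fin.
by apply: ereal_sup_ubound; exists 0 => //=; rewrite in_itv/= lexx T0.
Qed.

Lemma final_aux (R : realType) (y yt l lt u ut x k xt kt : R -> R) (T : R)
  (SA SB SC : \bar R) :
  regulated y -> regulated yt -> regulated l -> regulated lt ->
  regulated u -> regulated ut ->
  is_RP_solution y l u x k -> is_RP_solution yt lt ut xt kt -> 0 < T ->
  (0 <= SA)%E -> (0 <= SB)%E -> (0 <= SC)%E ->
  (forall s, 0 <= s -> s < T -> (`|y s - yt s|%:E <= SA)%E) ->
  (forall s, 0 <= s -> s < T -> (`|l s - lt s|%:E <= SB)%E) ->
  (forall s, 0 <= s -> s < T -> (`|u s - ut s|%:E <= SC)%E) ->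
  (supnT T (k \- kt)%R <= 2%:E * (SA + SB + SC))%E /\
  (supnT T (x \- xt)%R <= 3%:E * (SA + SB + SC))%E.
Proof.
move=> ry ryt rl rlt ru rut S1 S2 T0 A0 B0 C0 HA HB HC.
have [fin|nfin] := boolP (SA + SB + SC \is a fin_num); last first.
  have -> : (SA + SB + SC = +oo)%E.
    move: nfin; rewrite fin_numEn => /orP[/eqP H|/eqP //].
    by have := adde_ge0 (adde_ge0 A0 B0) C0; rewrite H.
  by split; rewrite mulry gtr0_sg// mul1e leey.
move: fin; rewrite !fin_numD => /andP[/andP[fA fB] fC].
move: (fine SA) (fineK fA) => a ea; move: (fine SB) (fineK fB) => b eb.
move: (fine SC) (fineK fC) => c ec.
subst SA SB SC.
have Ha s : 0 <= s -> s < T -> `|y s - yt s| <= a.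
  by move=> s0 sT; rewrite -lee_fin HA.
have Hb s : 0 <= s -> s < T -> `|l s - lt s| <= b.
  by move=> s0 sT; rewrite -lee_fin HB.
have Hc s : 0 <= s -> s < T -> `|u s - ut s| <= c.
  by move=> s0 sT; rewrite -lee_fin HC.
have Hk s : 0 <= s -> s < T -> `|k s - kt s| <= a + b + c.
  move=> s0 sT; rewrite ler_norml; apply/andP; split; last first.
    exact: (@one_side _ y yt l lt u ut x k xt kt T a b c ry ryt rl rlt ru rut S1 S2 T0 Ha Hb Hc s s0 sT).
  rewrite lerNl opprB.
  apply: (@one_side _ yt y lt l ut u xt kt x k T a b c ryt ry rlt rl rut ru S2 S1 T0) => // r r0 rT; rewrite distrC.
  - exact: Ha. - exact: Hb. - exact: Hc.
have a0 : 0 <= a by apply: le_trans (Ha 0 (lexx 0) T0).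
have b0 : 0 <= b by apply: le_trans (Hb 0 (lexx 0) T0).
have c0 : 0 <= c by apply: le_trans (Hc 0 (lexx 0) T0).
rewrite -!EFinD -!EFinM.
case: S1 => _ [_ [p1 [p2 [Hxk _]]]]; case: S2 => _ [_ [q1 [q2 [Hxkt _]]]].
split; apply: ge_ereal_sup => ? [s /=]; rewrite in_itv/= => /andP[s0 sT] <-;
  rewrite lee_fin.
  by apply: le_trans (Hk s s0 sT) _; lra.
rewrite (Hxk s s0).1 (Hxkt s s0).1.
have := Hk s s0 sT; have := Ha s s0 sT; rewrite !ler_norml => /andP[? ?] /andP[? ?].
apply/andP; split; lra.
Qed.

Lemma supnT_ub (R : realType) (T : R) (f : R -> R) s : 0 <= s -> s < T ->
  (`|f s|%:E <= supnT T f)%E.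
Proof.
by move=> s0 sT; apply: ereal_sup_ubound; exists s => //=; rewrite in_itv/= s0 sT.
Qed.

Theorem proposition2 (R : realType) (y yt l lt u ut x k xt kt : R -> R) (T : R) :
  regulated y -> regulated yt -> regulated l -> regulated lt ->
  regulated u -> regulated ut ->
  (forall t, 0 <= t -> l t <= u t) -> (forall t, 0 <= t -> lt t <= ut t) ->
  l 0 <= y 0 <= u 0 -> lt 0 <= yt 0 <= ut 0 ->
  (forall t : R, 0 <= t -> (0 < ereal_inf [set (u s - l s)%:E | s in `[0%R, t]])%E) ->
  (forall t : R, 0 <= t -> (0 < ereal_inf [set (ut s - lt s)%:E | s in `[0%R, t]])%E) ->
  is_RP_solution y l u x k -> is_RP_solution yt lt ut xt kt ->
  0 < T ->
  (supnT T (k \- kt)%R <=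
     2%:E * (supnT T (y \- yt)%R + supnT T (l \- lt)%R + supnT T (u \- ut)%R))%E /\
  (supnT T (x \- xt)%R <=
     3%:E * (supnT T (y \- yt)%R + supnT T (l \- lt)%R + supnT T (u \- ut)%R))%E.
Proof.
move=> ry ryt rl rlt ru rut _ _ _ _ _ _ S1 S2 T0.
apply: (@final_aux R y yt l lt u ut x k xt kt T _ _ _ ry ryt rl rlt ru rut S1 S2 T0).
- exact: (@supnT_ge0 R T _ T0).
- exact: (@supnT_ge0 R T _ T0).
- exact: (@supnT_ge0 R T _ T0).
- by move=> s s0 sT; apply: (@supnT_ub R T (y \- yt)%R s s0 sT).
- by move=> s s0 sT; apply: (@supnT_ub R T (l \- lt)%R s s0 sT).
- by move=> s s0 sT; apply: (@supnT_ub R T (u \- ut)%R s s0 sT).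
Qed.
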